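(* Let $\phi\in L^2(-1,0)$ and $T>1$, and consider the control problem $$\dot x(t)=x(t-1)+\int_{-1}^0x(t+\tau)\phi(\tau)\,d\tau+u(t),\ t>0,\qquad x(t)=x_0(t),\ t\in(-1,0),\ x(0)=\xi,$$ with initial data $\vec x=(\xi,x_0)\in\mathcal M=\mathbb C\times L^2(-1,0)$. The optimal control depends linearly on the initial data: if $u_1$ and $u_2$ are solutions of the problem $\|u\|_{L^2(0,T)}\to\min$, $u\in U(\vec x;T)$, for $\vec x=\vec x_1$ and $\vec x=\vec x_2$ respectively, then $u_1+u_2$ solves this problem for $\vec x=\vec x_1+\vec x_2$.
   Context: For $u\in L^2(0,T)$ the solution $x(t;\vec x,u)$ is the function equal to $x_0$ on $(-1,0)$ and, for $t\ge0$, absolutely continuous with $x(t)=\xi+\int_0^t\big[x(s-1)+\int_{-1}^0x(s+\tau)\phi(\tau)d\tau+u(s)\big]ds$. $U(\vec x;T)$ is the set of all $u\in L^2(0,T)$ such that $x(t;\vec x,u)=0$ for $t\in(T-1,T)$. *)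

(* Defs.v *)
From HB Require Import structures.
From mathcomp Require Import all_boot all_order all_algebra.
From mathcomp Require Import all_classical all_reals all_analysis.
From mathcomp Require Import complex.
Set Implicit Arguments. Unset Strict Implicit. Unset Printing Implicit Defensive.
Import Order.TTheory GRing.Theory Num.Theory.
Import numFieldNormedType.Exports.
Local Open Scope classical_set_scope.
Local Open Scope ring_scope.

Section DelayControl.
Variable R : realType.
Local Notation mu := (@lebesgue_measure R).

Definition cint (D : set R) (f : R -> R[i]) : R[i] :=
  (Rintegral mu D (fun t => complex.Re (f t)) +i*
   Rintegral mu D (fun t => complex.Im (f t)))%C.

Definition cintegrable (D : set R) (f : R -> R[i]) : Prop :=
  mu.-integrable D (fun t => (complex.Re (f t))%:E) /\
  mu.-integrable D (fun t => (complex.Im (f t))%:E).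

Definition csq (z : R[i]) : R := complex.Re z ^+ 2 + complex.Im z ^+ 2.

Definition L2 (D : set R) (f : R -> R[i]) : Prop :=
  measurable_fun D (fun t => complex.Re (f t)) /\
  measurable_fun D (fun t => complex.Im (f t)) /\
  mu.-integrable D (fun t => (csq (f t))%:E).

Definition L2normsq (D : set R) (f : R -> R[i]) : R :=
  Rintegral mu D (fun t => csq (f t)).

Definition delay_rhs (phi u x : R -> R[i]) (s : R) : R[i] :=
  x (s - 1) + cint `]-1, 0[ (fun tau => x (s + tau) * phi tau) + u s.

Definition is_solution (T : R) (phi : R -> R[i]) (xi : R[i]) (x0 u x : R -> R[i])
  : Prop :=
  (forall t, -1 < t < 0 -> x t = x0 t) /\
  (forall s, 0 <= s <= T -> cintegrable `]-1, 0[ (fun tau => x (s + tau) * phi tau)) /\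
  cintegrable `[0, T] (delay_rhs phi u x) /\
  (forall t, 0 <= t <= T -> x t = xi + cint `[0, t] (delay_rhs phi u x)).

(* u \in U((xi,x0); T) : u in L^2(0,T), the solution exists and every
   (i.e. the) solution vanishes on (T-1, T). *)
Definition admissible (T : R) (phi : R -> R[i]) (xi : R[i]) (x0 u : R -> R[i])
  : Prop :=
  L2 `]0, T[ u /\
  (exists x, is_solution T phi xi x0 u x) /\
  (forall x, is_solution T phi xi x0 u x -> forall t, T - 1 < t < T -> x t = 0).

Definition optimal_control (T : R) (phi : R -> R[i]) (xi : R[i]) (x0 u : R -> R[i])
  : Prop :=
  admissible T phi xi x0 u /\
  forall v, admissible T phi xi x0 v -> L2normsq `]0, T[ u <= L2normsq `]0, T[ v.

End DelayControl.

(* Main.v *)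
Require Import Defs.
From HB Require Import structures.
From mathcomp Require Import all_boot all_order all_algebra.
From mathcomp Require Import all_classical all_reals all_analysis.
From mathcomp Require Import complex.
From mathcomp Require Import ring lra.
Import Order.TTheory GRing.Theory Num.Theory.
Import numFieldNormedType.Exports.
Local Open Scope classical_set_scope.
Local Open Scope ring_scope.
Section S.
Context {R : realType}.
Local Notation mu := (@lebesgue_measure R).
Implicit Types (D : set R) (F G : R -> R) (f g h : R -> R[i]).

Definition cmb (a b : R) f g : R -> R[i] := fun t => (a%:C)%C * f t + (b%:C)%C * g t.

Lemma ReL (a b : R) (z w : R[i]) : complex.Re ((a%:C)%C * z + (b%:C)%C * w) = a * complex.Re z + b * complex.Re w.
Proof. case: z => x y; case: w => u v /=. ring. Qed.
Lemma ImL (a b : R) (z w : R[i]) : complex.Im ((a%:C)%C * z + (b%:C)%C * w) = a * complex.Im z + b * complex.Im w.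
Proof. case: z => x y; case: w => u v /=. ring. Qed.
Lemma ceq (z w : R[i]) : complex.Re z = complex.Re w -> complex.Im z = complex.Im w -> z = w.
Proof. by case: z => x y; case: w => u v /= -> ->. Qed.

Lemma intR_lin {D F G} (a b : R) : @measurable _ (measurableTypeR R) D ->
  mu.-integrable D (fun t => (F t)%:E) -> mu.-integrable D (fun t => (G t)%:E) ->
  mu.-integrable D (fun t => (a * F t + b * G t)%:E).
Proof.
move=> mD iF iG.
have := integrableD mD (integrableZl mD a iF) (integrableZl mD b iG).
by apply: eq_integrable => // t _ /=; rewrite EFinD !EFinM.
Qed.

Lemma RintR_lin {D F G} (a b : R) : @measurable _ (measurableTypeR R) D ->
  mu.-integrable D (fun t => (F t)%:E) -> mu.-integrable D (fun t => (G t)%:E) ->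
  Rintegral mu D (fun t => a * F t + b * G t) = a * Rintegral mu D F + b * Rintegral mu D G.
Proof.
move=> mD iF iG.
rewrite RintegralD //.
- by rewrite !RintegralZl.
- by have := integrableZl mD a iF; apply: eq_integrable => // t _ /=; rewrite EFinM.
- by have := integrableZl mD b iG; apply: eq_integrable => // t _ /=; rewrite EFinM.
Qed.

Lemma CI_lin {D f g} (a b : R) : @measurable _ (measurableTypeR R) D ->
  cintegrable D f -> cintegrable D g -> cintegrable D (cmb a b f g).
Proof.
move=> mD [f1 f2] [g1 g2]; split.
- by have := intR_lin a b mD f1 g1; apply: eq_integrable => // t _; rewrite /cmb ReL.
- by have := intR_lin a b mD f2 g2; apply: eq_integrable => // t _; rewrite /cmb ImL.
Qed.

Lemma CInt_lin {D f g} (a b : R) : @measurable _ (measurableTypeR R) D ->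
  cintegrable D f -> cintegrable D g ->
  cint D (cmb a b f g) = (a%:C)%C * cint D f + (b%:C)%C * cint D g.
Proof.
move=> mD [f1 f2] [g1 g2]; apply: ceq; rewrite ?ReL ?ImL /=.
- rewrite -RintR_lin //; apply: eq_Rintegral => t _; by rewrite /cmb ReL.
- rewrite -RintR_lin //; apply: eq_Rintegral => t _; by rewrite /cmb ImL.
Qed.

Lemma CI_ext {D f g} : @measurable _ (measurableTypeR R) D -> {in D, f =1 g} -> cintegrable D f -> cintegrable D g.
Proof.
move=> mD fg [f1 f2]; split.
- by apply: eq_integrable f1 => // t tD /=; rewrite fg.
- by apply: eq_integrable f2 => // t tD /=; rewrite fg.
Qed.

Lemma cint_ext {D f g} : {in D, f =1 g} -> cint D f = cint D g.
Proof.
move=> fg; rewrite /cint; congr (_ +i* _)%C; apply: eq_Rintegral => t tD; by rewrite fg.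
Qed.

Lemma csq_ge0 (z : R[i]) : 0 <= csq z.
Proof. by rewrite /csq addr_ge0 // sqr_ge0. Qed.

Lemma csq_meas D f : measurable_fun D (fun t => complex.Re (f t)) ->
  measurable_fun D (fun t => complex.Im (f t)) -> measurable_fun D (fun t => csq (f t)).
Proof. by move=> m1 m2; apply: measurable_realfun.measurable_funD; apply: measurable_realfun.measurable_funX. Qed.

Lemma L2_lin {D f g} (a b : R) : @measurable _ (measurableTypeR R) D -> L2 D f -> L2 D g -> L2 D (cmb a b f g).
Proof.
move=> mD [f1 [f2 f3]] [g1 [g2 g3]].
have m1 : measurable_fun D (fun t => complex.Re (cmb a b f g t)).
  rewrite /cmb; under eq_fun do rewrite ReL.
  by apply: measurable_realfun.measurable_funD; apply: measurable_realfun.measurable_funM => //; exact: measurable_cst.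
have m2 : measurable_fun D (fun t => complex.Im (cmb a b f g t)).
  rewrite /cmb; under eq_fun do rewrite ImL.
  by apply: measurable_realfun.measurable_funD; apply: measurable_realfun.measurable_funM => //; exact: measurable_cst.
split; [exact: m1| split; [exact: m2|]].
apply: (le_integrable mD _ _ (intR_lin (2 * a ^+ 2) (2 * b ^+ 2) mD f3 g3)).
  by apply/measurable_realfun.measurable_EFinP; exact: csq_meas.
move=> t _; rewrite !abse_EFin lee_fin !ger0_norm ?csq_ge0 //; last first.
  by rewrite addr_ge0 // mulr_ge0 // ?csq_ge0 // mulr_ge0 // sqr_ge0.
rewrite /csq /cmb ReL ImL.
set x := complex.Re (f t); set y := complex.Im (f t).
set u := complex.Re (g t); set v := complex.Im (g t).
have h1 := sqr_ge0 (a * x - b * u); have h2 := sqr_ge0 (a * y - b * v). nra.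
Qed.


Definition bil f g (t : R) := complex.Re (f t) * complex.Re (g t) + complex.Im (f t) * complex.Im (g t).
Definition B D f g := Rintegral mu D (bil f g).
Definition Qn D f := L2normsq D f.

Lemma bil_int {D f g} : @measurable _ (measurableTypeR R) D -> L2 D f -> L2 D g ->
  mu.-integrable D (fun t => (bil f g t)%:E).
Proof.
move=> mD [f1 [f2 f3]] [g1 [g2 g3]].
apply: (le_integrable mD _ _ (intR_lin 1 1 mD f3 g3)).
  apply/measurable_realfun.measurable_EFinP.
  by apply: measurable_realfun.measurable_funD; apply: measurable_realfun.measurable_funM.
move=> t _; rewrite !abse_EFin lee_fin [X in _ <= X]ger0_norm; last first.
  by rewrite addr_ge0 // mulr_ge0 // ?csq_ge0.
rewrite /bil /csq.
set x := complex.Re (f t); set y := complex.Im (f t).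
set u := complex.Re (g t); set v := complex.Im (g t).
have h1 := sqr_ge0 (x - u); have h2 := sqr_ge0 (y - v).
have h3 := sqr_ge0 (x + u); have h4 := sqr_ge0 (y + v).
rewrite ler_norml; apply/andP; split; nra.
Qed.

Lemma Q_lin {D f g} (a b : R) : @measurable _ (measurableTypeR R) D -> L2 D f -> L2 D g ->
  Qn D (cmb a b f g) = a ^+ 2 * Qn D f + b * (2 * a * B D f g + b * Qn D g).
Proof.
move=> mD hf hg.
have [_ [_ f3]] := hf; have [_ [_ g3]] := hg.
have ib := bil_int mD hf hg.
rewrite /Qn /L2normsq /B.
transitivity (Rintegral mu D (fun t => a ^+ 2 * csq (f t) + b * (2 * a * bil f g t + b * csq (g t)))).
  apply: eq_Rintegral => t _.
  rewrite /csq /cmb ReL ImL /bil. ring.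
rewrite RintR_lin //; last exact: intR_lin.
by rewrite RintR_lin.
Qed.

Lemma B_lin {D f g h} (a b : R) : @measurable _ (measurableTypeR R) D -> L2 D f -> L2 D g -> L2 D h ->
  B D (cmb a b f g) h = a * B D f h + b * B D g h.
Proof.
move=> mD hf hg hh.
rewrite /B -RintR_lin //; try exact: bil_int.
apply: eq_Rintegral => t _; rewrite /bil /cmb ReL ImL; ring.
Qed.

Lemma Q_ge0 D f : 0 <= Qn D f.
Proof. by apply: Rintegral_ge0 => t _; exact: csq_ge0. Qed.


Lemma mitv (i : interval R) : @measurable _ (measurableTypeR R) [set` i].
Proof. exact: measurable_itv. Qed.

Lemma sol_lin {T phi} (a b : R) {xi x0 u x eta y0 v y} :
  is_solution T phi xi x0 u x -> is_solution T phi eta y0 v y ->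
  is_solution T phi ((a%:C)%C * xi + (b%:C)%C * eta) (cmb a b x0 y0) (cmb a b u v) (cmb a b x y).
Proof.
move=> [h1 [h2 [h3 h4]]] [k1 [k2 [k3 k4]]].
have inner s : (fun tau => cmb a b x y (s + tau) * phi tau) =
    cmb a b (fun tau => x (s + tau) * phi tau) (fun tau => y (s + tau) * phi tau).
  by apply/funext => tau; rewrite /cmb; ring.
have rhs s : 0 <= s <= T -> delay_rhs phi (cmb a b u v) (cmb a b x y) s =
    cmb a b (delay_rhs phi u x) (delay_rhs phi v y) s.
  move=> hs; rewrite /delay_rhs inner CInt_lin; [|exact: mitv|exact: h2|exact: k2].
  rewrite /cmb; ring.
split; first by move=> t ht; rewrite /cmb h1 // k1.
split; first by move=> s hs; rewrite inner; apply: CI_lin; [exact: mitv|exact: h2|exact: k2].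
split.
  apply: (CI_ext _ _ (CI_lin a b (mitv _) h3 k3)); first exact: mitv.
  move=> s; rewrite inE /= in_itv /= => hs; by rewrite rhs.
move=> t ht.
have sub : [set` `[0, t]] `<=` [set` `[0, T]].
  move=> s /=; rewrite !in_itv /= => /andP[s0 st]; rewrite s0 /=.
  by case/andP: ht => _ tT; exact: le_trans tT.
have i3 : cintegrable `[0, t] (delay_rhs phi u x).
  by case: h3 => p q; split; apply: integrableS (mitv _) (mitv _) sub _.
have j3 : cintegrable `[0, t] (delay_rhs phi v y).
  by case: k3 => p q; split; apply: integrableS (mitv _) (mitv _) sub _.
rewrite (cint_ext (g := cmb a b (delay_rhs phi u x) (delay_rhs phi v y))); last first.
  move=> s; rewrite inE => hs; rewrite rhs //.
  by have := sub s hs; rewrite /= in_itv.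
rewrite CInt_lin; [|exact: mitv|exact: i3|exact: j3].
rewrite /cmb h4 // k4 //; ring.
Qed.


Lemma quad0 (Bv q : R) : 0 <= q -> (forall t, 0 <= t * (2 * Bv + t * q)) -> Bv = 0.
Proof.
move=> q0 H.
have s0 : 0 < q + 1 by lra.
have := H (- Bv / (q + 1)).
set t := - Bv / (q + 1) => h.
have e : t * (q + 1) = - Bv by rewrite /t mulrAC -mulrA divff ?mulr1 // gt_eqF.
have h2 : 0 <= (t * (q + 1)) * (2 * Bv * (q + 1) + (t * (q + 1)) * q).
  have -> : (t * (q + 1)) * (2 * Bv * (q + 1) + (t * (q + 1)) * q) =
    (q + 1) ^+ 2 * (t * (2 * Bv + t * q)) by ring.
  by rewrite mulr_ge0 // sqr_ge0.
rewrite e in h2.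
have h3 : Bv ^+ 2 * (q + 2) <= 0 by nra.
have : Bv ^+ 2 <= 0 by nra.
have := sqr_ge0 Bv => a b.
by apply/eqP; rewrite -sqrf_eq0 eq_le a b.
Qed.

Lemma cmb11 f g : cmb 1 1 f g = (fun t => f t + g t).
Proof. by apply/funext => t; rewrite /cmb rmorph1 !mul1r. Qed.

Lemma sol_eq (T : R) phi xi x0 u x xi' x0' u' :
  is_solution T phi xi x0 u x -> xi = xi' -> (forall t, x0 t = x0' t) ->
  (forall t, u t = u' t) -> is_solution T phi xi' x0' u' x.
Proof.
move=> h <- e1 e2.
have <- : x0 = x0' by apply/funext.
by have <- : u = u' by apply/funext.
Qed.


Lemma perturb (T : R) phi xi1 x01 u1 x1 xi2 x02 u2 x2 v y :
  L2 `]0, T[ u1 -> L2 `]0, T[ u2 -> L2 `]0, T[ v ->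
  is_solution T phi xi1 x01 u1 x1 -> is_solution T phi xi2 x02 u2 x2 ->
  is_solution T phi (xi1 + xi2) (fun t => x01 t + x02 t) v y ->
  (forall z, is_solution T phi xi1 x01 u1 z -> forall s, T - 1 < s < T -> z s = 0) ->
  (forall s, T - 1 < s < T -> x2 s = 0) ->
  (forall z, is_solution T phi (xi1 + xi2) (fun t => x01 t + x02 t) v z ->
     forall s, T - 1 < s < T -> z s = 0) ->
  forall t, admissible T phi xi1 x01 (cmb 1 t u1 (cmb 1 (-1) v (fun s => u1 s + u2 s))).
Proof.
move=> L1 L2' Lv s1 s2 sy van1 van2 vany t.
have Lw : L2 `]0, T[ (cmb 1 (-1) v (fun s => u1 s + u2 s)).
  by apply: L2_lin (mitv _) Lv _; rewrite -cmb11; exact: L2_lin (mitv _) L1 L2'.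
split; first exact: L2_lin (mitv _) L1 Lw.
split.
  exists (cmb 1 t x1 (cmb 1 (-1) y (cmb 1 1 x1 x2))).
  apply: sol_eq (sol_lin 1 t s1 (sol_lin 1 (-1) sy (sol_lin 1 1 s1 s2))) _ _ _.
  - by rewrite ?rmorphN ?rmorph1; ring.
  - by move=> s; rewrite /cmb ?rmorphN ?rmorph1; ring.
  - by move=> s; rewrite /cmb ?rmorphN ?rmorph1; ring.
move=> y' sy' s hs.
have [t0|t0] := eqVneq t 0.
  apply: (van1 y' _ s hs); apply: sol_eq sy' _ _ _ => // r.
  by rewrite /cmb t0 rmorph0 mul0r addr0 rmorph1 mul1r.
set c := t^-1.
have ct : (c%:C)%C * (t%:C)%C = 1 by rewrite -rmorphM mulVf // rmorph1.
set r := cmb 1 1 (cmb c (-c) y' x1) (cmb 1 1 x1 x2).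
have sr : is_solution T phi (xi1 + xi2) (fun t => x01 t + x02 t) v r.
  apply: sol_eq (sol_lin 1 1 (sol_lin c (-c) sy' s1) (sol_lin 1 1 s1 s2)) _ _ _.
  - by rewrite ?rmorphN ?rmorph1; ring.
  - by move=> p; rewrite /cmb ?rmorphN ?rmorph1; ring.
  - move=> p; rewrite /cmb ?rmorphN ?rmorph1.
    transitivity (((c%:C)%C * (t%:C)%C) * (v p - u1 p - u2 p) + u1 p + u2 p); first by ring.
    by rewrite ct; ring.
have e : r s = (c%:C)%C * y' s - (c%:C)%C * x1 s + x1 s + x2 s.
  by rewrite /r /cmb ?rmorphN ?rmorph1; ring.
rewrite (vany r sr s hs) (van1 x1 s1 s hs) (van2 s hs) mulr0 !addr0 subr0 in e.
have : (c%:C)%C * y' s == 0 by rewrite -e.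
rewrite mulf_eq0 => /orP[|/eqP //].
by rewrite fmorph_eq0 invr_eq0 (negbTE t0).
Qed.

End S.

Theorem corollary1 (R : realType) (phi : R -> R[i]) (T : R)
  (xi1 xi2 : R[i]) (x01 x02 u1 u2 : R -> R[i]) :
  L2 `]-1, 0[ phi -> 1 < T ->
  L2 `]-1, 0[ x01 -> L2 `]-1, 0[ x02 ->
  optimal_control T phi xi1 x01 u1 ->
  optimal_control T phi xi2 x02 u2 ->
  optimal_control T phi (xi1 + xi2) (fun t => x01 t + x02 t) (fun t => u1 t + u2 t).
Proof.
move=> _ _ _ _ [[Lu1 [[x1 s1] van1]] min1] [[Lu2 [[x2 s2] van2]] min2].
have mI := mitv `]0, T[.
have LU : L2 `]0, T[ (cmb 1 1 u1 u2) by exact: L2_lin mI Lu1 Lu2.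
split.
  split; first by rewrite -cmb11.
  split.
    exists (cmb 1 1 x1 x2); apply: sol_eq (sol_lin 1 1 s1 s2) _ _ _.
    - by rewrite rmorph1 !mul1r.
    - by move=> p; rewrite /cmb rmorph1 !mul1r.
    - by move=> p; rewrite /cmb rmorph1 !mul1r.
  move=> y sy s hs.
  have sz : is_solution T phi xi1 x01 u1 (cmb 1 (-1) y x2).
    apply: sol_eq (sol_lin 1 (-1) sy s2) _ _ _.
    - by rewrite rmorphN rmorph1; ring.
    - by move=> p; rewrite /cmb rmorphN rmorph1; ring.
    - by move=> p; rewrite /cmb rmorphN rmorph1; ring.
  have := van1 _ sz s hs.
  by rewrite /cmb rmorphN rmorph1 (van2 x2 s2 s hs) mulr0 addr0 mul1r.
move=> v [Lv [[y sy] vany]].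
set w := cmb 1 (-1) v (fun s => u1 s + u2 s).
have Lw : L2 `]0, T[ w by apply: L2_lin mI Lv _; rewrite -cmb11.
have A1 := perturb _ _ _ _ _ _ _ _ _ _ _ _ Lu1 Lu2 Lv s1 s2 sy van1 (van2 x2 s2) vany.
have sy' : is_solution T phi (xi2 + xi1) (fun t => x02 t + x01 t) v y.
  by apply: sol_eq sy _ _ _ => // *; rewrite addrC.
have vany' : forall z, is_solution T phi (xi2 + xi1) (fun t => x02 t + x01 t) v z ->
     forall s, T - 1 < s < T -> z s = 0.
  by move=> z sz; apply: vany; apply: sol_eq sz _ _ _ => // *; rewrite addrC.
have A2 := perturb _ _ _ _ _ _ _ _ _ _ _ _ Lu2 Lu1 Lv s2 s1 sy' van2 (van1 x1 s1) vany'.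
have ew : cmb 1 (-1) v (fun s => u2 s + u1 s) = w.
  by apply/funext => p; rewrite /w /cmb (addrC (u2 p)).
rewrite ew in A2.
have B1 : B `]0, T[ u1 w = 0.
  apply: (quad0 _ _ (Q_ge0 `]0, T[ w)).
  move=> t; have H := min1 _ (A1 t).
  have E := Q_lin 1 t mI Lu1 Lw; rewrite /Qn /B in E; rewrite E expr1n mul1r mulr1 in H.
  rewrite /B.
  move: H; set X := t * _; lra.
have B2 : B `]0, T[ u2 w = 0.
  apply: (quad0 _ _ (Q_ge0 `]0, T[ w)).
  move=> t; have H := min2 _ (A2 t).
  have E := Q_lin 1 t mI Lu2 Lw; rewrite /Qn /B in E; rewrite E expr1n mul1r mulr1 in H.
  rewrite /B.
  move: H; set X := t * _; lra.
have ev : v = cmb 1 1 (cmb 1 1 u1 u2) w.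
  by apply/funext => p; rewrite /w /cmb rmorphN rmorph1; ring.
change (Qn `]0, T[ (fun t => u1 t + u2 t) <= Qn `]0, T[ v).
rewrite ev Q_lin // B_lin // B1 B2 -cmb11.
have := Q_ge0 `]0, T[ w.
rewrite expr1n.
set a := Qn _ (cmb 1 1 u1 u2); set b := Qn _ w; lra.
Qed.
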